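(* Let $n\ge4$ be even, $p\ge n+1$ an integer, $c_1$ a positive integer, $a_k=pc_k$, $c_{k+1}=p^2c_k$, and let $T$, $I^{(j)}$, $I^{(j)}_i$ and $\lambda_1$ be as in the context. Then for every $j\ge1$: (1) $\dfrac{\lambda_1(I^{(j)}_1\cup I^{(j)}_n)}{\lambda_1(I^{(j)})}>\dfrac12$; (2) $\dfrac{\lambda_1\bigl(\bigcup_{i=2}^{n-1}I^{(j)}_i\bigr)}{\lambda_1(I^{(j)})}<\dfrac{n}{c_j}$.
   Context: $\pi$ is the permutation of $\{1,\dots,n\}$ with top row $1,2,\dots,n$ and bottom row $n,3,2,5,4,\dots,n-1,n-2,1$. Right Rauzy induction: step ''0'' when the rightmost domain (top) interval is longer, ''1'' when the rightmost image (bottom) interval is longer. For $a,c>0$, $\dot\gamma_{m,a}=1^{n-1-m}0^a10^2$, $\gamma_{a,c}=0\,\dot\gamma_{n-2,a}\cdots\dot\gamma_{2,a}\,1^{c(n-1)}$; its transition matrix $\Theta_{a,c}$ (old lengths $=\Theta_{a,c}\cdot$new lengths) has row $1=(1,c,\dots,c)$, row $n=(1,c+1,\dots,c+1)$, and for $1\le i\le(n-2)/2$: row $2i$ has $0$ in column 1, $2$ in columns $2i,2i+1$, $1$ in the other columns among $2,\dots,n$; row $2i+1$ has $a$ in column $2i$, $a+1$ in column $2i+1$, $0$ elsewhere. $\Theta_k=\Theta_{a_k,c_k}$. $T$ is an IET of $[0,1)$ with permutation $\pi$ whose right Rauzy induction path is $\gamma_{a_1,c_1}\gamma_{a_2,c_2}\cdots$;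 $I^{(j)}$ is the interval on which the induced map lives after the first $j$ blocks and $I^{(j)}_1,\dots,I^{(j)}_n$ its exchanged subintervals; lengths satisfy $\ell^{(j-1)}=\Theta_j\ell^{(j)}$. For $v\ge0$, $|v|$ is the sum of entries and $\overline v=v/|v|$. $\lambda_1$ denotes the $T$-invariant Borel probability measure such that for every $j\ge0$, $(\lambda_1(I^{(j)}_i))_i$ is a positive multiple of $\lim_{m\to\infty}\overline{\Theta_{j+1}\cdots\Theta_me_1}$. *)

(* Defs.v *)
From HB Require Import structures.
From mathcomp Require Import all_boot all_order all_algebra.
From mathcomp Require Import all_classical all_reals all_analysis.
Set Implicit Arguments. Unset Strict Implicit. Unset Printing Implicit Defensive.
Import Order.TTheory GRing.Theory Num.Theory.
Local Open Scope ring_scope.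

(* Entry (r, s) of Theta_{a,c}, with 1-based row index r and column index s
   (1 <= r, s <= n), exactly as in the paper:
   row 1 = (1, c, ..., c); row n = (1, c+1, ..., c+1);
   row 2i (2 <= 2i <= n-2): 0 in column 1, 2 in columns 2i, 2i+1, 1 elsewhere;
   row 2i+1 (3 <= 2i+1 <= n-1): a in column 2i, a+1 in column 2i+1, 0 elsewhere. *)
Definition theta_entry (n a c r s : nat) : nat :=
  if r == 1%N then (if s == 1%N then 1%N else c)
  else if r == n then (if s == 1%N then 1%N else c.+1)
  else if ~~ odd r then
    (if s == 1%N then 0%N else if (s == r) || (s == r.+1) then 2%N else 1%N)
  else
    (if s == r.-1 then a else if s == r then a.+1 else 0%N).

(* The n x n matrix Theta_{a,c}; the 0-based ordinal i : 'I_n stands for the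
   paper's index i+1. *)
Definition Theta (R : realType) (n a c : nat) : 'M[R]_n :=
  \matrix_(i, k) (theta_entry n a c i.+1 k.+1)%:R.

Definition e1 (R : realType) (n : nat) : 'cV[R]_n := \col_i (nat_of_ord i == 0%N)%:R.

(* Theta_{j+1} Theta_{j+2} ... Theta_m e_1 (with Theta_k = Theta_{a_k, c_k});
   the empty product (m <= j) is the identity. *)
Definition ThetaProdVec (R : realType) (n : nat) (a c : nat -> nat) (j m : nat)
  : 'cV[R]_n :=
  foldr (fun k v => Theta R n (a k) (c k) *m v) (e1 R n) (iota j.+1 (m - j)).

Definition vsum (R : realType) (n : nat) (v : 'cV[R]_n) : R := \sum_i v i ord0.
Definition vnormalize (R : realType) (n : nat) (v : 'cV[R]_n) : 'cV[R]_n :=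
  (vsum v)^-1 *: v.

(* Main.v *)
Require Import Defs.
From HB Require Import structures.
From mathcomp Require Import all_boot all_order all_algebra.
From mathcomp Require Import all_classical all_reals all_analysis.
From mathcomp Require Import zify.
From mathcomp Require Import lra.
Import Order.TTheory GRing.Theory Num.Theory numFieldNormedType.Exports.

Definition tent n a c (r k : nat) := theta_entry n a c r.+1 k.+1.
Definition tmul n a c (u : nat -> nat) (r : nat) : nat :=
  \sum_(0 <= k < n) tent n a c r k * u k.
Definition Ysum n (u : nat -> nat) := \sum_(1 <= k < n) u k.
Definition Msum n (u : nat -> nat) := \sum_(1 <= k < n.-1) u k.

Lemma sum_ind m n j (f : nat -> nat) : m <= j < n ->
  \sum_(m <= k < n) (k == j) * f k = f j.
Proof.
move=> /andP[hm hn].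
rewrite (@big_cat_nat _ _ _ j m n) //; last exact: ltnW.
rewrite /= [X in _ + X]big_ltn // eqxx mul1n.
rewrite big_nat_cond big1; last first.
  by move=> k /andP[/andP[_ hk] _]; rewrite (ltn_eqF hk).
rewrite big_nat_cond big1 ?addn0 //.
by move=> k /andP[/andP[hk _] _]; rewrite gtn_eqF.
Qed.

Lemma Ysum_split n u : 2 <= n -> Ysum n u = Msum n u + u n.-1.
Proof.
move=> hn; rewrite /Ysum /Msum.
have -> : n = n.-1.+1 by lia.
rewrite big_nat_recr /=; last by lia.
by [].
Qed.

Lemma tmul0 n a c u : 1 <= n -> tmul n a c u 0 = u 0 + c * Ysum n u.
Proof.
move=> hn; rewrite /tmul big_ltn // /tent /theta_entry /= mul1n.
congr (_ + _); rewrite /Ysum big_distrr /=.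
by apply: eq_big_nat => k /andP[hk _]; rewrite /= eqSS; case: k hk.
Qed.

Lemma tmuln n a c u : 2 <= n -> tmul n a c u n.-1 = u 0 + c.+1 * Ysum n u.
Proof.
move=> hn; rewrite /tmul big_ltn; last by lia.
rewrite /tent /theta_entry /=.
have -> : n.-1.+1 = n by lia.
rewrite (_ : (n == 1) = false); last by apply/eqP; lia.
rewrite eqxx mul1n.
congr (_ + _); rewrite /Ysum big_distrr /=.
by apply: eq_big_nat => k /andP[hk _]; rewrite /= eqSS; case: k hk.
Qed.

Lemma tmul_odd n a c u r : odd r -> r.+2 < n -> 
  tmul n a c u r = Ysum n u + u r + u r.+1.
Proof.
move=> hr hn; rewrite /tmul big_ltn; last by lia.
rewrite /tent /theta_entry /=.
rewrite (_ : (r.+1 == 1) = false); last by apply/eqP; case: r hr {hn}.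
rewrite (_ : (r.+1 == n) = false); last by apply/eqP; lia.
rewrite hr /= mul0n add0n.
rewrite -(@sum_ind 1 n r u); last by case: r hr hn => //= r _ hn; lia.
rewrite -(@sum_ind 1 n r.+1 u); last by case: r hr hn => //= r _ hn; lia.
rewrite /Ysum -!big_split /=.
apply: eq_big_nat => k /andP[hk _]; rewrite !eqSS.
case: k hk => // k _ /=.
case: (eqVneq k.+1 r) => [e|hkr].
  have -> : (k.+1 == r.+1) = false by apply/eqP; lia.
  by rewrite /=; lia.
rewrite /=.
case: (eqVneq k.+1 r.+1) => [e|hkr2] /=; lia.
Qed.

Lemma tmul_even n a c u r : ~~ odd n -> ~~ odd r -> 2 <= r -> r < n -> 
  tmul n a c u r = a * u r.-1 + a.+1 * u r.
Proof.
move=> hn hr h2 hrn; rewrite /tmul.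
rewrite -(@sum_ind 0 n r.-1 u); last by lia.
rewrite -(@sum_ind 0 n r u); last by lia.
rewrite !big_distrr -big_split /=.
apply: eq_big_nat => k /andP[hk _].
rewrite /tent /theta_entry /=.
rewrite (_ : (r.+1 == 1) = false); last by apply/eqP; lia.
rewrite (_ : (r.+1 == n) = false); last first.
  by apply/eqP => e; move: hn; rewrite -e /= hr.
rewrite hr /= eqSS.
case: (eqVneq k.+1 r) => [e|h1].
  rewrite -e /= eqxx (_ : (k == k.+1) = false) //; lia.
case: (eqVneq k r) => [e|h2'].
  have -> : (k == r.-1) = false by apply/eqP; lia.
  by rewrite /=; lia.
have -> : (k == r.-1) = false by apply/eqP; move/eqP: h1; lia.
by rewrite /=; lia.
Qed.

Lemma pair_sum h (w : nat -> nat) :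
  \sum_(1 <= k < (2 * h).+1) w k = \sum_(0 <= i < h) (w (2 * i).+1 + w (2 * i).+2).
Proof.
elim: h => [|h IH]; first by rewrite !big_geq.
rewrite [RHS]big_nat_recr //= -IH.
have -> : (2 * h.+1).+1 = ((2 * h).+2).+1 by lia.
rewrite big_nat_recr //= big_nat_recr //=; try lia.
Qed.

Lemma mid_bound n h a c u : n = (2 * h).+2 ->
  Msum n (tmul n a c u) <= h * Ysum n u + (a + 2) * Msum n u.
Proof.
move=> hn; rewrite /Msum.
have -> : n.-1 = (2 * h).+1 by lia.
rewrite !pair_sum.
set Y := Ysum n u.
have -> : h * Y + (a + 2) * \sum_(0 <= i < h) (u (2 * i).+1 + u (2 * i).+2)
   = \sum_(0 <= i < h) (Y + (a + 2) * (u (2 * i).+1 + u (2 * i).+2)).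
  by rewrite [RHS]big_split /= sum_nat_const_nat subn0 -big_distrr.
rewrite big_nat_cond [X in _ <= X]big_nat_cond.
apply: leq_sum => i /andP[/andP[_ hi] _].
rewrite tmul_odd; last by lia. 2: by rewrite oddS oddM.
rewrite tmul_even; first last.
- by lia.
- by lia.
- by rewrite /= oddM.
- by rewrite hn /= oddM.
rewrite /= -/Y; lia.
Qed.

Lemma arith_step n h p cc M un Y u0 :
  n = (2 * h).+2 -> 2 <= p -> 1 <= cc -> p ^ 2 * cc * M <= n * un -> Y = M + un ->
  cc * (h * Y + (p * cc + 2) * M) <= n * (u0 + cc.+1 * Y).
Proof.
move=> hn hp hc hM hY.
have e1 : p * (p * cc * cc * M) <= cc * (n * un).
  by rewrite -(leq_pmul2l hc) in hM; move: hM; rewrite expnS expn1; nia.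
have e2 : p * cc * cc * M <= cc * (h + 1) * un.
  have : 2 * (p * cc * cc * M) <= p * (p * cc * cc * M) by rewrite leq_mul2r hp orbT.
  move=> /leq_trans /(_ e1); rewrite hn; nia.
have e3 : 2 * cc * M <= (h + 1) * un.
  have : 4 * (cc * M) <= p ^ 2 * (cc * M).
    have h4 : 4 <= p ^ 2 by rewrite (_ : 4 = 2 ^ 2) // leq_exp2r.
    by rewrite leq_mul2r h4 orbT.
  rewrite mulnA [p ^ 2 * _]mulnA => /leq_trans /(_ hM); rewrite hn; nia.
rewrite hY; nia.
Qed.

Definition Inv n cc (u : nat -> nat) :=
  [/\ 1 <= u 0, u 0 <= u n.-1 & cc * Msum n u <= n * u n.-1].

Lemma Inv_step n h p cc u : n = (2 * h).+2 -> 2 <= p -> 1 <= cc ->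
  Inv n (p ^ 2 * cc) u -> Inv n cc (tmul n (p * cc) cc u).
Proof.
move=> hn hp hc [h1 h2 h3].
have hn2 : 2 <= n by lia.
rewrite /Inv tmul0 ?tmuln //; try lia.
split.
- by apply: leq_trans h1 (leq_addr _ _).
- by rewrite leq_add2l leq_mul2r leqnSn orbT.
- apply: leq_trans (_ : cc * (h * Ysum n u + (p * cc + 2) * Msum n u) <= _).
    by rewrite leq_mul2l mid_bound ?orbT.
  apply: (@arith_step n h p cc (Msum n u) (u n.-1)) => //.
  exact: Ysum_split.
Qed.

Definition e1n (k : nat) : nat := (k == 0).

Lemma Inv_base n h a cc : n = (2 * h).+2 -> Inv n cc (tmul n a cc e1n).
Proof.
move=> hn.
have hY : Ysum n e1n = 0.
  by rewrite /Ysum big_nat_cond big1 // => k /andP[/andP[hk _] _]; rewrite /e1n; case: k hk.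
have hM : Msum n e1n = 0.
  by rewrite /Msum big_nat_cond big1 // => k /andP[/andP[hk _] _]; rewrite /e1n; case: k hk.
have hn2 : 2 <= n by lia.
rewrite /Inv tmul0 ?tmuln ?hY //; try lia.
split => //.
have := @mid_bound n h a cc e1n hn; rewrite hY hM !muln0 addn0 leqn0 => /eqP ->.
by rewrite muln0.
Qed.

Fixpoint NV n (a c : nat -> nat) (j d : nat) : nat -> nat :=
  match d with
  | 0 => tmul n (a j.+1) (c j.+1) e1n
  | d'.+1 => tmul n (a j.+1) (c j.+1) (NV n a c j.+1 d')
  end.

Lemma NV_Inv n h p (a c : nat -> nat) : n = (2 * h).+2 -> 2 <= p ->
  (forall k, 1 <= k -> a k = p * c k) ->
  (forall k, 1 <= k -> c k.+1 = p ^ 2 * c k) ->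
  (forall k, 1 <= k -> 1 <= c k) ->
  forall d j, Inv n (c j.+1) (NV n a c j d).
Proof.
move=> hn hp ha hc hpos; elim=> [|d IH] j /=; first exact: (@Inv_base n h _ _ hn).
rewrite ha //; apply: (@Inv_step n h p) => //; first exact: hpos.
by rewrite -hc //; apply: IH.
Qed.

Local Open Scope classical_set_scope.
Local Open Scope ring_scope.

Lemma mul_col (R : realType) n a c (u : nat -> nat) :
  Theta R n a c *m (\col_i (u i)%:R) = \col_i (tmul n a c u i)%:R :> 'cV[R]_n.
Proof.
apply/matrixP => i k; rewrite !mxE /tmul big_mkord natr_sum.
by apply: eq_bigr => l _; rewrite !mxE natrM.
Qed.

Lemma e1_col (R : realType) n : e1 R n = \col_i (e1n i)%:R.
Proof. by apply/matrixP => i k; rewrite !mxE. Qed.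

Lemma foldr_NV (R : realType) n a c j d :
  foldr (fun k v => Theta R n (a k) (c k) *m v) (e1 R n) (iota j.+1 d.+1)
  = \col_i (NV n a c j d i)%:R.
Proof.
elim: d j => [|d IH] j /=; first by rewrite e1_col mul_col.
have := IH j.+1 => /= ->. by rewrite mul_col.
Qed.

Lemma TPV (R : realType) n a c j m : (j < m)%N ->
  ThetaProdVec R n a c j m = \col_i (NV n a c j (m - j.+1) i)%:R.
Proof.
move=> hjm; rewrite /ThetaProdVec.
have -> : (m - j = (m - j.+1).+1)%N by lia.
exact: foldr_NV.
Qed.

Lemma vsum_col (R : realType) n (u : nat -> nat) :
  vsum (\col_i (u i)%:R : 'cV[R]_n) = (\sum_(i < n) u i)%:R.
Proof. by rewrite /vsum natr_sum; apply: eq_bigr => i _; rewrite mxE. Qed.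

Lemma Msum_ord n (u : nat -> nat) : (2 <= n)%N ->
  (\sum_(i < n | (0 < i < n.-1)%N) u i = Msum n u)%N.
Proof.
move=> hn; rewrite -(big_mkord (fun i => 0 < i < n.-1)%N u) big_mkcond /Msum.
rewrite (@big_cat_nat _ _ _ 1 0 n) //=; last by lia.
rewrite (@big_cat_nat _ _ _ n.-1 1 n) //=; try lia.
rewrite big_nat1 /= add0n.
rewrite [X in (_ + X)%N]big_nat_cond [X in (_ + X)%N]big1 ?addn0; last first.
  by move=> k /andP[/andP[h1 _] _]; rewrite (_ : (k < n.-1)%N = false) ?andbF //; lia.
apply: eq_big_nat => k /andP[h1 h2]; by rewrite h1 h2.
Qed.

Lemma near_oo (P : nat -> Prop) N : (forall m, (N <= m)%N -> P m) -> \forall m \near \oo, P m.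
Proof. by move=> H; exists N => // m /= hm; apply: H. Qed.

Lemma sum_cvg (R : realType) n (P : pred 'I_n) (f : 'I_n -> nat -> R) (L : 'I_n -> R) :
  (forall i, f i @ \oo --> L i) ->
  (fun m => \sum_(i < n | P i) f i m) @ \oo --> \sum_(i < n | P i) L i.
Proof.
move=> H; apply: (@cvg_big R 'I_n +%R 0 P _ _ _ (index_enum 'I_n) (fun i m => f i m) L) => //.
  exact: add_continuous.
Qed.

Lemma mu_union (R : realType) n (mu : {measure set R -> \bar R}) (F : 'I_n -> set R)
  (D : set 'I_n) (P : pred 'I_n) :
  (forall i, measurable (F i)) -> (forall i k, i != k -> F i `&` F k = set0) ->
  D = [set i | P i] ->
  mu (\bigcup_(i in D) F i) = (\sum_(i < n | P i) mu (F i))%E.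
Proof.
move=> hm hd hD; rewrite measure_fin_bigcup //.
- rewrite (@bigfs _ _ _ _ (index_enum 'I_n) P) ?index_enum_uniq //.
    have -> : D = [set` P] by rewrite hD; apply/seteqP; split.
    by [].
  by move=> i _; rewrite mem_index_enum.
- exact: finite_finset.
- move=> i k _ _ [x [h1 h2]]; apply/eqP; apply: contraT => /hd e.
  by have : (F i `&` F k) x by []; rewrite e.
Qed.

Theorem mainTheorem5 (R : realType) (n p c1 : nat) (a c : nat -> nat)
  (mu : {measure set R -> \bar R}) (I : nat -> set R) (Isub : nat -> 'I_n -> set R) :
  (4 <= n)%N -> ~~ odd n -> (n.+1 <= p)%N -> (0 < c1)%N ->
  c 1%N = c1 ->
  (forall k, (1 <= k)%N -> a k = (p * c k)%N) ->
  (forall k, (1 <= k)%N -> c k.+1 = (p ^ 2 * c k)%N) ->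
  mu [set: R] = 1%E ->
  (forall j i, measurable (Isub j i)) ->
  (forall j (i k : 'I_n), i != k -> Isub j i `&` Isub j k = set0) ->
  (forall j, I j = \bigcup_(i in [set: 'I_n]) Isub j i) ->
  (forall j, exists2 t : R, 0 < t &
     forall i : 'I_n,
       (fun m => vnormalize (ThetaProdVec R n a c j m) i ord0) @ \oo
         --> (fine (mu (Isub j i)) / t : R)) ->
  forall j, (1 <= j)%N ->
    1 / 2 < fine (mu (\bigcup_(i in [set i : 'I_n | (nat_of_ord i == 0%N) || (nat_of_ord i == n.-1)]) Isub j i))
              / fine (mu (I j))
    /\
    fine (mu (\bigcup_(i in [set i : 'I_n | (0 < nat_of_ord i < n.-1)%N]) Isub j i))
      / fine (mu (I j)) < n%:R / (c j)%:R.
Proof.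
move=> hn4 hne hp hc1 hc1e ha hc hmuT hmeas hdisj hI hlim j hj.
have [h hn] : exists h, n = (2 * h).+2.
  exists (n./2).-1; have := odd_double_half n; rewrite (negbTE hne) add0n -mul2n; lia.
have hp2 : (2 <= p)%N by lia.
have hcpos : forall k, (1 <= k)%N -> (1 <= c k)%N.
  elim => // k IH _; case: k IH => [|k] IH; first by rewrite hc1e.
  by rewrite hc // muln_gt0 expn_gt0 IH // andbT; lia.
have hInv := @NV_Inv n h p a c hn hp2 ha hc hcpos.
have [t ht hL] := hlim j.
set L := fun i : 'I_n => fine (mu (Isub j i)) / t.
set f := fun (i : 'I_n) (m : nat) => vnormalize (ThetaProdVec R n a c j m) i ord0.
have hn0 : (0 < n)%N by lia.
have hnl : (n.-1 < n)%N by lia.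
pose i0 : 'I_n := Ordinal hn0.
pose il : 'I_n := Ordinal hnl.
have fE : forall m i, (j < m)%N -> f i m =
    (NV n a c j (m - j.+1) i)%:R / (\sum_(k < n) NV n a c j (m - j.+1) k)%:R.
  by move=> m i hm; rewrite /f /vnormalize TPV // vsum_col !mxE mulrC.
have Sge : forall d, (NV n a c j d 0 <= \sum_(k < n) NV n a c j d k)%N /\
                     (NV n a c j d n.-1 <= \sum_(k < n) NV n a c j d k)%N.
  move=> d; split.
    by rewrite (bigD1 i0) //= leq_addr.
  by rewrite (bigD1 il) //= leq_addr.
have Spos : forall d, (0 < \sum_(k < n) NV n a c j d k)%N.
  move=> d; have [h1 _ _] := hInv d j; exact: leq_trans h1 (proj1 (Sge d)).
have F1 : forall m, (j < m)%N -> \sum_(i < n) f i m = 1.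
  move=> m hm; rewrite (eq_bigr _ (fun i _ => fE m i hm)) -mulr_suml -natr_sum.
  by rewrite divff // pnatr_eq0 -lt0n.
have F2 : forall m, (j < m)%N ->
    \sum_(i < n | (0 < nat_of_ord i < n.-1)%N) f i m <= n%:R / (c j.+1)%:R.
  move=> m hm; rewrite (eq_bigr _ (fun i _ => fE m i hm)) -mulr_suml -natr_sum Msum_ord; last by lia.
  have [h1 h2 h3] := hInv (m - j.+1)%N j.
  have hC := hcpos j.+1 isT.
  rewrite ler_pdivrMr ?ltr0n // mulrAC ler_pdivlMr ?ltr0n // -!natrM ler_nat.
  rewrite mulnC; apply: leq_trans h3 _; rewrite leq_mul2l (proj2 (Sge _)) orbT //.
have SL : \sum_(i < n) L i = 1.
  have hcv := @sum_cvg R n xpredT f L hL.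
  apply/eqP; rewrite eq_le; apply/andP; split.
    apply: (cvgr_to_le hcv); apply: (@near_oo _ j.+1) => m hm; by rewrite F1.
  apply: (cvgr_to_ge hcv); apply: (@near_oo _ j.+1) => m hm; by rewrite F1.
have ML : \sum_(i < n | (0 < nat_of_ord i < n.-1)%N) L i <= n%:R / (c j.+1)%:R.
  have hcv := @sum_cvg R n (fun i : 'I_n => (0 < nat_of_ord i < n.-1)%N) f L hL.
  apply: (cvgr_to_le hcv); apply: (@near_oo _ j.+1) => m hm; exact: F2.
have hfin : forall i, mu (Isub j i) = (t * L i)%:E.
  move=> i; have h0 : (0 <= mu (Isub j i))%E := measure_ge0 _ _.
  have h1 : (mu (Isub j i) <= 1)%E.
    rewrite -hmuT; apply: le_measure; rewrite ?inE //; exact: measurableT.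
  have hf : mu (Isub j i) \is a fin_num.
    by rewrite ge0_fin_numE // (le_lt_trans h1) // ltry.
  by rewrite /L mulrC divfK ?gt_eqF // fineK.
have muP : forall (P : pred 'I_n),
    mu (\bigcup_(i in [set i | P i]) Isub j i) = (t * \sum_(i < n | P i) L i)%:E.
  move=> P; rewrite (@mu_union R n mu (Isub j) _ P (hmeas j) (hdisj j)) //.
  under eq_bigr do rewrite hfin.
  by rewrite sumEFin mulr_sumr.
have muI : fine (mu (I j)) = t.
  rewrite hI (_ : [set: 'I_n] = [set i | xpredT i]); last by apply/seteqP; split.
  by rewrite muP /= SL mulr1.
rewrite muI muP /= muP /= [t * _]mulrC mulfK ?gt_eqF // [t * _]mulrC mulfK ?gt_eqF //.
set Sout := \sum_(i < n | (nat_of_ord i == 0%N) || (nat_of_ord i == n.-1)) L i.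
set Smid := \sum_(i < n | (0 < nat_of_ord i < n.-1)%N) L i.
have hsplit : Sout + Smid = 1.
  rewrite -SL (bigID (fun i : 'I_n => (nat_of_ord i == 0%N) || (nat_of_ord i == n.-1))) /=.
  congr (_ + _); apply: eq_bigl => i.
  have := ltn_ord i; move: (nat_of_ord i) => k hk.
  case: k hk => [|k] hk //=.
  rewrite ltn_neqAle (_ : (k.+1 <= n.-1)%N = true) ?andbT //.
  by apply/idP; lia.
have hCj := hc j hj.
have hcj := hcpos j hj.
have hC : (0 < c j.+1)%N by rewrite hCj muln_gt0 expn_gt0; lia.
have k1 : n%:R / (c j.+1)%:R < 1 / 2 :> R.
  rewrite ltr_pdivrMr ?ltr0n // mul1r mulrC ltr_pdivlMr ?ltr0n // -natrM ltr_nat hCj.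
  have : (n.+1 ^ 2 <= p ^ 2)%N by rewrite leq_exp2r.
  nia.
have k2 : n%:R / (c j.+1)%:R < n%:R / (c j)%:R :> R.
  rewrite ltr_pdivrMr ?ltr0n // mulrAC ltr_pdivlMr ?ltr0n // -!natrM ltr_nat hCj.
  have : (4 <= p ^ 2)%N by rewrite (_ : 4 = 2 ^ 2)%N // leq_exp2r.
  nia.
split.
  have -> : Sout = 1 - Smid by rewrite -hsplit addrK.
  move: (le_lt_trans ML k1); rewrite -/Smid => hh; lra.
exact: le_lt_trans ML k2.
Qed.
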